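(* Let $G$ be an oriented graph. A set $I\subseteq V(G)$ is an oriented independent set if and only if no two vertices of $I$ are adjacent and no two vertices of $I$ are connected by a directed $2$-path.
   Context: An oriented graph is a finite directed graph with no directed cycle of length 1 or 2. An oriented coloring of $G$ is a map $f$ from $V(G)$ to a set of colors such that (i) $f(x)\neq f(y)$ for every arc $xy$, and (ii) for all arcs $xy, zw$, $f(y)=f(z)$ implies $f(x)\neq f(w)$. A set $I\subseteq V(G)$ is an oriented independent set if for every two distinct $x,y\in I$ there is an oriented coloring $f$ of $G$ with $f(x)=f(y)$. Vertices $x,y$ are connected by a directed $2$-path if for some vertex $v$, $xv$ and $vy$ are arcs, or $yv$ and $vx$ are arcs. *)

(* Defs.v *)
From mathcomp Require Import all_boot.
Set Implicit Arguments. Unset Strict Implicit. Unset Printing Implicit Defensive.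

Definition oriented_graph (T : finType) (arc : rel T) : Prop :=
  (forall x, ~~ arc x x) /\ (forall x y, ~~ (arc x y && arc y x)).

Definition oriented_coloring (T : finType) (arc : rel T) (C : Type) (f : T -> C) : Prop :=
  (forall x y, arc x y -> f x <> f y) /\
  (forall x y z w, arc x y -> arc z w -> f y = f z -> f x <> f w).

Definition oriented_independent (T : finType) (arc : rel T) (I : {set T}) : Prop :=
  forall x y, x \in I -> y \in I -> x != y ->
    exists (C : Type) (f : T -> C), oriented_coloring arc f /\ f x = f y.

Definition adjacent (T : finType) (arc : rel T) (x y : T) : bool :=
  arc x y || arc y x.

Definition dipath2 (T : finType) (arc : rel T) (x y : T) : Prop :=
  exists v, (arc x v && arc v y) || (arc y v && arc v x).

(* Main.v *)
Require Import Defs.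
From mathcomp Require Import all_boot.

Theorem proposition3 (T : finType) (arc : rel T) (I : {set T}) :
  oriented_graph arc ->
  (oriented_independent arc I <->
   (forall x y, x \in I -> y \in I -> x != y ->
      ~~ adjacent arc x y /\ ~ dipath2 arc x y)).
Proof.
move=> [irr asym]; split.
- move=> H x y xI yI xy; have [C [f [[c1 c2] fxy]]] := H x y xI yI xy.
  split.
  + apply/negP; rewrite /adjacent => /orP [a|a].
    * exact: (c1 _ _ a fxy).
    * exact: (c1 _ _ a (esym fxy)).
  + move=> [v /orP [/andP [a b]|/andP [a b]]].
    * exact: (c2 _ _ _ _ a b erefl fxy).
    * exact: (c2 _ _ _ _ a b erefl (esym fxy)).
- move=> H x y xI yI xy; have [nadj ndp] := H x y xI yI xy.
  have nxy : ~~ arc x y by move: nadj; rewrite /adjacent negb_or => /andP [].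
  have nyx : ~~ arc y x by move: nadj; rewrite /adjacent negb_or => /andP [].
  have p1 : forall v, arc x v -> arc v y -> False.
    by move=> v a b; apply: ndp; exists v; rewrite a b.
  have p2 : forall v, arc y v -> arc v x -> False.
    by move=> v a b; apply: ndp; exists v; rewrite a b orbT.
  have ir : forall a, arc a a -> False by move=> a h; move: (irr a); rewrite h.
  have as2 : forall a b, arc a b -> arc b a -> False
    by move=> a b h1 h2; move: (asym a b); rewrite h1 h2.
  have nxy' : arc x y -> False by move=> h; move: nxy; rewrite h.
  have nyx' : arc y x -> False by move=> h; move: nyx; rewrite h.
  exists T, (fun z => if z == y then x else z); split; last by rewrite eqxx (negbTE xy).
  split.
  + move=> a b ab; case: eqP => [ay|ay]; case: eqP => [by_|by_] //=; subst.
    * by move=> _; apply: ir ab.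
    * by move=> e; subst; apply: nyx' ab.
    * by move=> e; subst; apply: nxy' ab.
    * by move=> e; subst; apply: ir ab.
  + move=> a b c d ab cd.
    case: (a =P y) => [?|ay]; case: (b =P y) => [?|by_];
    case: (c =P y) => [?|cy]; case: (d =P y) => [?|dy]; subst => e1 e2; subst;
    solve [ by eauto | by apply: ir; eauto | by apply: (as2 _ _ ab cd) | idtac ].
Qed.
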